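(* For a positive integer $d$, the number of primitive $(d,d)$-necklaces is odd if and only if $d$ is squarefree.
   Context: A $(d,d)$-necklace is a circular arrangement of $d$ white and $d$ black beads modulo cyclic rotation; it is primitive if its orbit under rotation has exactly $2d$ elements. *)

(* Defs.v *)
From mathcomp Require Import all_boot.
Set Implicit Arguments. Unset Strict Implicit. Unset Printing Implicit Defensive.

Definition word (n : nat) := n.-tuple bool.

Definition necklace_of (n : nat) (w : word n) : {set word n} :=
  [set [tuple of rot i w] | i : 'I_n].

Definition balanced (d : nat) (w : word (2 * d)) : bool := count id w == d.

Definition primitive_necklaces (d : nat) : {set {set word (2 * d)}} :=
  [set necklace_of w | w in [set w : word (2 * d) |
      balanced w && (#|necklace_of w| == 2 * d)]].

Definition squarefree (n : nat) : bool :=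
  [forall p : 'I_n.+1, prime p ==> ~~ (p * p %| n)].

(* Main.v *)
Require Import Defs.
From mathcomp Require Import all_boot zify.
Set Implicit Arguments. Unset Strict Implicit. Unset Printing Implicit Defensive.

Definition fw n (w : word n) (j : nat) : bool := nth false w (j %% n).

Lemma nth_rotb (s : seq bool) i j : i <= size s -> j < size s ->
  nth false (rot i s) j = nth false s ((i + j) %% size s).
Proof.
move=> hi hj; rewrite /rot nth_cat size_drop.
case: ifP => h.
  by rewrite nth_drop modn_small //; lia.
rewrite nth_take; last by lia.
have -> : i + j = (j - (size s - i)) + size s by lia.
by rewrite modnDr modn_small //; lia.
Qed.

Lemma fw_rot n (w : word n) i j : i <= n -> fw [tuple of rot i w] j = fw w (i + j).
Proof.
move=> hi; destruct n as [|n].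
  by case: w => s; rewrite /fw /= size_eq0 => /eqP ->; rewrite !nth_nil.
rewrite /fw /= nth_rotb ?size_tuple ?ltn_pmod //.
by rewrite modnDmr.
Qed.

Lemma fw_per n (w : word n) j k : fw w (j + k * n) = fw w j.
Proof. by rewrite /fw addnC modnMDl. Qed.

Lemma fw_ext n (w1 w2 : word n) : (forall j, fw w1 j = fw w2 j) -> w1 = w2.
Proof.
move=> H; apply: eq_from_tnth => i.
have := H i; rewrite /fw modn_small // => E.
by rewrite !(tnth_nth false).
Qed.

Lemma fw_neg n (w : word n) j : 0 < n -> fw (map_tuple negb w) j = ~~ fw w j.
Proof. by move=> n0; rewrite /fw /= (nth_map false) // size_tuple ltn_pmod. Qed.

Lemma fw_mk n (g : nat -> bool) j : 0 < n -> fw [tuple g i | i < n] j = g (j %% n).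
Proof.
move=> n0; rewrite /fw.
have h : j %% n < n by rewrite ltn_pmod.
have := nth_mktuple (fun i : 'I_n => g i) false (Ordinal h).
by move=> /= ->.
Qed.
Definition perP (f : nat -> bool) p := forall j, f (j + p) = f j.

Lemma perM f p k : perP f p -> perP f (k * p).
Proof. move=> H; elim: k => [|k IH] j; first by rewrite addn0. by rewrite mulSn addnA IH H. Qed.

Lemma per_mod f p q : perP f p -> perP f q -> perP f (q %% p).
Proof.
move=> Hp Hq j; rewrite -(perM (q %/ p) Hp (j + q %% p)).
have -> : j + q %% p + q %/ p * p = j + q by rewrite -addnA [q %% p + _]addnC -divn_eq.
exact: Hq.
Qed.

Lemma per_gcd f m n : perP f m -> perP f n -> perP f (gcdn m n).
Proof.
elim/ltn_ind: m n => m IH n Hm Hn.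
case: (posnP m) => [m0|m0]; first by rewrite m0 gcd0n.
rewrite gcdnE (negbTE (lt0n_neq0 m0)).
by apply: IH; [rewrite ltn_pmod | apply: per_mod | ].
Qed.

Lemma fw_perP n (w : word n) : perP (fw w) n.
Proof. by move=> j; have := fw_per w j 1; rewrite mul1n. Qed.

Lemma perP_fin n (w : word n) p : 0 < n ->
  (forall j, j < n -> fw w (j + p) = fw w j) -> perP (fw w) p.
Proof.
move=> n0 H j; rewrite (divn_eq j n) [_ * n + _]addnC -addnA [_ * n + p]addnC addnA.
by rewrite !fw_per H // ltn_pmod.
Qed.

Definition perb n (w : word n) p : bool := [forall j : 'I_n, fw w (j + p) == fw w j].

Lemma perbP n (w : word n) p : 0 < n -> reflect (perP (fw w) p) (perb w p).
Proof.
move=> n0; apply: (iffP forallP) => H.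
  by apply: perP_fin => // j hj; apply/eqP: (H (Ordinal hj)).
by move=> j; apply/eqP.
Qed.

Lemma mp_ex n (w : word n) : exists p, (0 < p) && perb w p.
Proof.
case: (posnP n) => [n0|n0].
  by exists 1; rewrite /perb; apply/forallP => -[j hj]; exfalso; rewrite n0 in hj.
by exists n; rewrite n0 /=; apply/(perbP _ _ n0); apply: fw_perP.
Qed.

Definition mp n (w : word n) : nat := ex_minn (mp_ex w).

Lemma mp_pos n (w : word n) : 0 < mp w.
Proof. by rewrite /mp; case: ex_minnP => p /andP[]. Qed.

Lemma mp_per n (w : word n) : 0 < n -> perP (fw w) (mp w).
Proof. by move=> n0; rewrite /mp; case: ex_minnP => p /andP[_ H] _; exact/(perbP _ _ n0). Qed.

Lemma mp_min n (w : word n) q : 0 < n -> 0 < q -> perP (fw w) q -> mp w <= q.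
Proof.
move=> n0 q0 Hq; rewrite /mp; case: ex_minnP => p _; apply.
by rewrite q0; apply/(perbP _ _ n0).
Qed.

Lemma mp_dvd n (w : word n) q : 0 < n -> perP (fw w) q -> mp w %| q.
Proof.
move=> n0 Hq; case: (posnP q) => [->|q0]; first exact: dvdn0.
have Hg := per_gcd (mp_per w n0) Hq.
have g0 : 0 < gcdn (mp w) q by rewrite gcdn_gt0 mp_pos.
have := mp_min n0 g0 Hg.
have := dvdn_leq (mp_pos w) (dvdn_gcdl (mp w) q) => h1 h2.
have -> : mp w = gcdn (mp w) q by apply/eqP; rewrite eqn_leq h1 h2.
exact: dvdn_gcdr.
Qed.

Lemma mp_le n (w : word n) : 0 < n -> mp w <= n.
Proof. by move=> n0; apply: mp_min => //; apply: fw_perP. Qed.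

Lemma rot_eqE n (w : word n) (i k : 'I_n) :
  ([tuple of rot i w] == [tuple of rot k w]) = [forall j : 'I_n, fw w (i + j) == fw w (k + j)].
Proof.
apply/eqP/forallP => [E j | H].
  by rewrite -(fw_rot w j (ltnW (ltn_ord i))) -(fw_rot w j (ltnW (ltn_ord k))) E.
apply: fw_ext => j; rewrite (fw_rot w j (ltnW (ltn_ord i))) (fw_rot w j (ltnW (ltn_ord k))).
have n0 : 0 < n by apply: leq_ltn_trans (ltn_ord i).
rewrite (divn_eq j n) [_ * n + _]addnC !addnA !fw_per.
exact/eqP/(H (Ordinal (ltn_pmod j n0))).
Qed.

Lemma shift_per n (w : word n) i k : 0 < n -> i <= k -> i <= n ->
  (forall j, j < n -> fw w (i + j) = fw w (k + j)) -> perP (fw w) (k - i).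
Proof.
move=> n0 ik iN H.
have H' : forall j, fw w (i + j) = fw w (k + j).
  move=> j; rewrite (divn_eq j n) [_ * n + _]addnC !addnA !fw_per.
  by apply: H; rewrite ltn_pmod.
move=> j.
have := H' (j + n - i).
have -> : i + (j + n - i) = j + 1 * n by lia.
have -> : k + (j + n - i) = j + (k - i) + 1 * n by lia.
by rewrite !fw_per.
Qed.

Lemma prim_mp n (w : word n) : 0 < n -> (#|necklace_of w| == n) = (mp w == n).
Proof.
move=> n0.
have -> : (#|necklace_of w| == n) = (#|necklace_of w| == #|'I_n|) by rewrite card_ord.
apply/imset_injP/idP => [inj | /eqP E].
  rewrite eqn_leq mp_le //= leqNgt; apply/negP => lt.
  have E : [tuple of rot (Ordinal lt) w] = [tuple of rot (Ordinal n0) w] :> word n.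
    apply/eqP; rewrite rot_eqE; apply/forallP => j /=.
    by rewrite add0n addnC mp_per.
  have := inj _ _ isT isT E.
  by move=> /(congr1 val) /= E'; move: (mp_pos w); rewrite E'.
move=> i k _ _ /eqP; rewrite rot_eqE => /forallP H.
have key : forall a b : 'I_n, a < b ->
    (forall j, j < n -> fw w (a + j) = fw w (b + j)) -> False.
  move=> a b ab Hab.
  have P := shift_per n0 (ltnW ab) (ltnW (ltn_ord a)) Hab.
  have := mp_min n0 _ P; rewrite subn_gt0 ab E => /(_ isT).
  have := ltn_ord b; lia.
apply: val_inj => /=; case: (ltngtP i k) => // lt; exfalso.
  by apply: (key i k lt) => j hj; apply/eqP: (H (Ordinal hj)).
by apply: (key k i lt) => j hj; apply: esym; apply/eqP: (H (Ordinal hj)).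
Qed.

Lemma invol_odd (T : finType) (S : {set T}) (g : T -> T) :
  (forall x, x \in S -> g x \in S) -> (forall x, x \in S -> g (g x) = x) ->
  odd #|S| = odd #|[set x in S | g x == x]|.
Proof.
move Hn: #|S| => n; elim/ltn_ind: n S Hn => n IH S Hn HS Hg.
case: (boolP [exists x in S, g x != x]) => [/exists_inP [x xS gx] | none].
  set S' := S :\: [set x; g x].
  have sub : [set x; g x] \subset S by apply/subsetP => y; rewrite !inE => /orP[]/eqP->; rewrite ?HS.
  have cS : #|S| = #|S'| + 2.
    rewrite /S' cardsD (setIidPr sub) cards2 eq_sym gx.
    have := subset_leq_card sub; rewrite cards2 eq_sym gx; lia.
  have -> : [set y in S | g y == y] = [set y in S' | g y == y].
    apply/setP => y; rewrite !inE; case: (boolP (y \in S)) => yS //=; rewrite ?andbF //.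
    case: (eqVneq (g y) y) => gy; rewrite ?andbF ?andbT //.
    symmetry; apply/negP => /orP[]/eqP E; subst y; first by move: gx; rewrite gy eqxx.
    by move: gx; rewrite Hg // in gy; rewrite -gy eqxx.
  have -> : odd n = odd #|S'| by rewrite -Hn cS oddD addbF.
  apply: (IH #|S'|) => //; first by rewrite -Hn cS addn2.
    move=> y; rewrite !inE => /andP[yn yS]; rewrite HS // andbT.
    apply/negP => /orP[]/eqP E; move: yn.
      by rewrite -E Hg // eqxx orbT.
    by move: E => /(congr1 g); rewrite !Hg // => ->; rewrite eqxx.
  by move=> y; rewrite !inE => /andP[_ yS]; apply: Hg.
have -> : [set y in S | g y == y] = S.
  apply/setP => y; rewrite inE; case: (boolP (y \in S)) => //= yS.
  by apply/negPn/negP => ny; move/negP: none; apply; apply/exists_inP; exists y.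
by rewrite Hn.
Qed.

Lemma fw_modE n (w : word n) x y : x %% n = y %% n -> fw w x = fw w y.
Proof. by rewrite /fw => ->. Qed.

Lemma mem_neck n (w v : word n) :
  reflect (exists i : 'I_n, v = [tuple of rot i w]) (v \in necklace_of w).
Proof. by apply: (iffP imsetP) => [[i _ ->]|[i ->]]; exists i. Qed.

Lemma rot_rot_t n (w : word n) (i k : 'I_n) (h : (k + i) %% n < n) :
  [tuple of rot k [tuple of rot i w]] = [tuple of rot (Ordinal h) w] :> word n.
Proof.
apply: fw_ext => j.
rewrite (fw_rot _ _ (ltnW (ltn_ord k))) (fw_rot _ _ (ltnW (ltn_ord i))).
rewrite (fw_rot _ _ (ltnW h)); apply: fw_modE => /=.
by rewrite modnDml addnA [i + k]addnC.
Qed.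

Lemma neck_eq n (w v : word n) : v \in necklace_of w -> necklace_of v = necklace_of w.
Proof.
move=> /mem_neck [i ->].
have n0 : 0 < n by apply: leq_ltn_trans (ltn_ord i).
apply/setP => u; apply/mem_neck/mem_neck => -[k ->].
  by exists (Ordinal (ltn_pmod (k + i) n0)); apply: rot_rot_t.
have h : (k + (n - i)) %% n < n by rewrite ltn_pmod.
exists (Ordinal h).
rewrite rot_rot_t; first by rewrite ltn_pmod.
move=> h'; apply/eqP; rewrite rot_eqE; apply/forallP => j /=; apply/eqP.
apply: fw_modE; rewrite modnDml -addnA modnDml.
have -> : k + (n - i) + (i + j) = (k + j) + n by have := ltn_ord i; lia.
by rewrite modnDr.
Qed.

Lemma self_neck n (w : word n) : 0 < n -> w \in necklace_of w.
Proof.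
move=> n0; apply/mem_neck; exists (Ordinal n0); apply: val_inj => /=; by rewrite rot0.
Qed.

Definition neg n (w : word n) : word n := map_tuple negb w.

Lemma negK n : involutive (@neg n).
Proof. by move=> w; apply: val_inj; rewrite /= -map_comp map_id_in // => b _ /=; rewrite negbK. Qed.

Lemma neg_rot n (w : word n) i : neg [tuple of rot i w] = [tuple of rot i (neg w)].
Proof. by apply: val_inj; rewrite /= map_rot. Qed.

Definition cmp n (N : {set word n}) : {set word n} := [set neg w | w in N].

Lemma cmp_neck n (w : word n) : cmp (necklace_of w) = necklace_of (neg w).
Proof.
rewrite /cmp /necklace_of -imset_comp; apply: eq_imset => i /=; exact: neg_rot.
Qed.

Lemma cmpK n (N : {set word n}) : cmp (cmp N) = N.
Proof.
rewrite /cmp -imset_comp (eq_imset (g := id)) ?imset_id // => w /=; exact: negK.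
Qed.

Lemma count_neg n (w : word n) : count id (neg w) = n - count id w.
Proof.
apply: (@eq_trans _ _ (size w - count id w)); last by rewrite size_tuple.
rewrite -(count_predC id w) addKn /= count_map.
by apply: eq_count => b.
Qed.

Lemma card_neck_neg n (w : word n) : #|necklace_of (neg w)| = #|necklace_of w|.
Proof. by rewrite -cmp_neck card_imset //; apply: (can_inj (@negK n)). Qed.

Definition antiperb d (w : word (2 * d)) : bool := rot d w == map negb w.
Definition Wset d := [set w : word (2 * d) | (#|necklace_of w| == 2 * d) && antiperb w].
Definition Fixs d := [set N in primitive_necklaces d | cmp N == N].

Lemma antiper_bal d (w : word (2 * d)) : antiperb w -> balanced w.
Proof.
move/eqP=> E; rewrite /balanced.
have h1 : count id (rot d w) = count id w by apply/permP; rewrite perm_rot perm_refl.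
have := count_neg w; rewrite /= -E h1; lia.
Qed.

Lemma primP d (N : {set word (2 * d)}) :
  reflect (exists2 w : word (2 * d), balanced w && (#|necklace_of w| == 2 * d) & N = necklace_of w)
    (N \in primitive_necklaces d).
Proof.
apply: (iffP imsetP) => [[w]|[w]]; rewrite ?inE => H ->; by exists w; rewrite ?inE.
Qed.

Lemma cmp_P d N : N \in primitive_necklaces d -> cmp N \in primitive_necklaces d.
Proof.
move=> /primP [w /andP[b p] ->]; apply/primP; exists (neg w); last exact: cmp_neck.
rewrite card_neck_neg p andbT /balanced count_neg.
by move: b; rewrite /balanced => /eqP ->; apply/eqP; lia.
Qed.

Lemma odd_P d : odd #|primitive_necklaces d| = odd #|Fixs d|.
Proof.
apply: invol_odd => N NP; [exact: cmp_P | exact: cmpK].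
Qed.

Lemma fix_antiper d (w : word (2 * d)) : 0 < d -> #|necklace_of w| == 2 * d ->
  cmp (necklace_of w) = necklace_of w -> antiperb w.
Proof.
move=> d0 pw cw.
have n0 : 0 < 2 * d by rewrite muln_gt0.
have : neg w \in necklace_of w by rewrite -cw; apply: imset_f; apply: self_neck.
move=> /mem_neck [i Ei].
have Hi : forall j, fw w (i + j) = ~~ fw w j.
  by move=> j; rewrite -(fw_rot _ _ (ltnW (ltn_ord i))) -Ei fw_neg.
have Pi : perP (fw w) (i + i).
  by move=> j; rewrite addnC -addnA Hi Hi negbK.
have := mp_dvd n0 Pi; rewrite (eqP (etrans (esym (prim_mp w n0)) pw)).
rewrite addnn -mul2n dvdn_pmul2l // => /dvdnP [q Eq].
have iv : val i = d.
  case: q Eq => [|[|q]] Eq.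
  - have i0 : nat_of_ord i = 0 by rewrite Eq.
    by have := Hi 0; rewrite addn0 i0; case: (fw w 0).
  - by apply: (etrans Eq); rewrite mul1n.
  - by have := ltn_ord i; rewrite Eq; lia.
by rewrite /antiperb; apply/eqP; have := congr1 val Ei; rewrite /= iv => <-.
Qed.

Lemma W_fix d (w : word (2 * d)) : 0 < d -> w \in Wset d -> necklace_of w \in Fixs d.
Proof.
move=> d0; rewrite inE => /andP[pw aw].
have n0 : 0 < 2 * d by rewrite muln_gt0.
rewrite inE; apply/andP; split.
  by apply/primP; exists w => //; rewrite pw antiper_bal.
rewrite cmp_neck; apply/eqP; apply: neck_eq.
have hd : d < 2 * d by lia.
apply/mem_neck; exists (Ordinal hd); apply: val_inj => /=.
by rewrite (eqP aw).
Qed.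

Lemma fix_W d N : 0 < d -> N \in Fixs d -> [set w in Wset d | necklace_of w == N] = N.
Proof.
move=> d0; rewrite inE => /andP[/primP [w0 /andP[b0 p0] EN] /eqP cN].
have n0 : 0 < 2 * d by rewrite muln_gt0.
have a0 : antiperb w0 by apply: fix_antiper => //; rewrite -EN.
apply/setP => w; rewrite !inE.
apply/idP/idP => [/andP[_ /eqP <-]|wN]; first exact: self_neck.
have Ew : necklace_of w = N by rewrite EN; apply: neck_eq; rewrite -EN.
rewrite Ew eqxx andbT EN p0 /=.
move: wN; rewrite EN => /mem_neck [i ->].
by rewrite /antiperb /= rot_rot (eqP a0) map_rot.
Qed.

Lemma card_W d : 0 < d -> #|Wset d| = #|Fixs d| * (2 * d).
Proof.
move=> d0.
rewrite -sum1_card (partition_big (fun w => necklace_of w) (mem (Fixs d))); last first.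
  by move=> w /= wW; apply: W_fix.
rewrite -sum_nat_const; apply: eq_bigr => N NF.
rewrite sum1dep_card.
rewrite (fix_W d0 NF).
have : N \in Fixs d by [].
rewrite inE => /andP[/primP [w0 /andP[_ p0] ->] _].
exact/eqP.
Qed.

Lemma antiperP d (w : word (2 * d)) : 0 < d ->
  reflect (forall j, fw w (j + d) = ~~ fw w j) (antiperb w).
Proof.
move=> d0; have n0 : 0 < 2 * d by rewrite muln_gt0.
have hd : d <= 2 * d by lia.
apply: (iffP eqP) => [E j | H].
  have Et : [tuple of rot d w] = neg w :> word (2 * d) by apply: val_inj.
  by rewrite addnC -(fw_rot _ _ hd) Et fw_neg.
have : [tuple of rot d w] = neg w :> word (2 * d).
  by apply: fw_ext => j; rewrite fw_neg // (fw_rot _ _ hd) addnC H.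
by move/(congr1 val).
Qed.

Definition Tset d := [set w : word (2 * d) | antiperb w].

Definition psig d (u : d.-tuple bool) (i : nat) : bool :=
  if i < d then nth false u i else ~~ nth false u (i - d).
Definition psi d (u : d.-tuple bool) : word (2 * d) := [tuple psig u i | i < 2 * d].

Lemma nth_mk n (g : nat -> bool) j : j < n -> nth false [tuple g i | i < n] j = g j.
Proof.
move=> jn; have n0 : 0 < n by apply: leq_ltn_trans jn.
by have := fw_mk g j n0; rewrite /fw !modn_small.
Qed.

Lemma card_T d : 0 < d -> #|Tset d| = 2 ^ d.
Proof.
move=> d0; have n0 : 0 < 2 * d by rewrite muln_gt0.
have inj : injective (@psi d).
  move=> u1 u2 E; apply: val_inj; apply: (@eq_from_nth _ false); first by rewrite !size_tuple.
  move=> i; rewrite size_tuple => id.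
  have := congr1 (fun w : word (2 * d) => nth false w i) E.
  by rewrite /psi !nth_mk /psig ?id //; lia.
have -> : Tset d = (@psi d) @: setT.
  apply/setP => w; rewrite inE; apply/idP/imsetP => [aw|[u _ ->]].
    have H := (antiperP w d0) aw.
    exists [tuple fw w i | i < d]; first by [].
    apply: fw_ext => j; rewrite /psi fw_mk // /psig.
    have r2 : j %% (2 * d) < 2 * d by rewrite ltn_pmod.
    have Ej : fw w j = fw w (j %% (2 * d)) by apply: fw_modE; rewrite modn_mod.
    case: ifP => rd; first by rewrite nth_mk // Ej.
    rewrite nth_mk; last by lia.
    rewrite -H Ej; congr (fw w _); lia.
  apply/(antiperP _ d0) => j; rewrite /psi !fw_mk // /psig.
  set r := j %% (2 * d).
  have r2 : r < 2 * d by rewrite ltn_pmod.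
  have -> : (j + d) %% (2 * d) = (r + d) %% (2 * d) by rewrite modnDml.
  case: (ltnP r d) => rd.
    rewrite modn_small; last by lia.
    by rewrite ltnNge leq_addl /= addnK.
  have -> : r + d = (r - d) + 2 * d by lia.
  rewrite modnDr modn_small; last by lia.
  by rewrite ifT ?negbK //; lia.
by rewrite card_imset // cardsT card_tuple card_bool.
Qed.

Lemma per_modE (f : nat -> bool) p j : perP f p -> f (j %% p) = f j.
Proof. by move=> H; rewrite {2}(divn_eq j p) addnC (perM _ H). Qed.

Lemma T_key d (w : word (2 * d)) : 0 < d -> w \in Tset d ->
  exists e, [/\ mp w = 2 * e, 0 < e, e %| d, odd (d %/ e) &
    (forall j, fw w (j + e) = ~~ fw w j)].
Proof.
move=> d0; rewrite inE => /(antiperP _ d0) A.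
have n0 : 0 < 2 * d by rewrite muln_gt0.
set p := mp w.
have pP : perP (fw w) p := mp_per w n0.
have p0 : 0 < p := mp_pos w.
have pd : p %| 2 * d := mp_dvd n0 (fw_perP w).
have npd : ~~ (p %| d).
  apply/negP => /dvdnP [k Ek].
  have := A 0; rewrite add0n => A0.
  have := perM k pP 0; rewrite add0n -Ek A0.
  by case: (fw w 0).
move: pd => /dvdnP [k Ek].
have ko : odd k.
  apply/negPn/negP => ke.
  move/negP: npd; apply; apply/dvdnP; exists k./2.
  have Hk : k = 2 * k./2 by have := odd_double_half k; rewrite (negbTE ke) add0n mul2n.
  move: Ek; rewrite {1}Hk -mulnA => /eqP; rewrite eqn_pmul2l // => /eqP ->.
  by rewrite mulnC.
have pe : ~~ odd p.
  by apply/negP => po; have := congr1 odd Ek; rewrite !oddM ko po.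
set e := p./2.
have Ep : p = 2 * e by have := odd_double_half p; rewrite (negbTE pe) add0n mul2n => <-.
have Ed : d = k * e by move: Ek; rewrite Ep mulnCA => /eqP; rewrite eqn_pmul2l // => /eqP.
have e0 : 0 < e by move: p0; rewrite Ep; lia.
exists e; split => //.
- by rewrite Ed dvdn_mull.
- by rewrite Ed mulnK.
move=> j.
have Ed' : d = e + k./2 * p.
  by rewrite Ed Ep -{1}(odd_double_half k) ko -mul2n; lia.
rewrite -A; have -> : j + d = (j + e) + k./2 * p by rewrite {1}Ed' addnA.
by rewrite (perM _ pP).
Qed.

Definition phi d e (r : word (2 * e)) : word (2 * d) := [tuple fw r i | i < 2 * d].

Lemma fw_phi d e (r : word (2 * e)) j : 0 < d -> e %| d -> fw (phi d r) j = fw r j.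
Proof.
move=> d0 ed; rewrite /phi fw_mk ?muln_gt0 //.
apply: per_modE.
have -> : 2 * d = d %/ e * (2 * e) by rewrite mulnCA divnK.
exact: perM (fw_perP r).
Qed.

Definition key d (w : word (2 * d)) : 'I_d.+1 := inord (mp w)./2.

Lemma key_val d (w : word (2 * d)) e : e <= d -> mp w = 2 * e -> key w = inord e.
Proof. by move=> _ E; rewrite /key E mul2n doubleK. Qed.

Lemma fiber d (e : 'I_d.+1) : 0 < d -> e %| d -> odd (d %/ e) ->
  [set w in Tset d | key w == e] = (@phi d e) @: Wset e.
Proof.
move=> d0 ed eo.
have n0 : 0 < 2 * d by rewrite muln_gt0.
have e0 : 0 < e by case: (posnP e) ed => [->|//]; rewrite dvd0n => /eqP E; move: d0; rewrite E.
have ne0 : 0 < 2 * e by rewrite muln_gt0.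
apply/setP => w; rewrite !inE; apply/idP/imsetP => [/andP[wT /eqP kw] | [r rW ->]].
  have wT' : w \in Tset d by rewrite inE.
  have [e' [E' e'0 e'd e'o A']] := T_key d0 wT'.
  have e'le : e' <= d by apply: dvdn_leq.
  have ee : e' = e.
    by move: kw; rewrite (key_val e'le E') => /(congr1 val) /=; rewrite inordK.
  subst e'.
  have pP : perP (fw w) (2 * e) by rewrite -E'; apply: mp_per.
  set r := [tuple fw w i | i < 2 * e] : word (2 * e).
  have fr : forall j, fw r j = fw w j by move=> j; rewrite /r fw_mk // per_modE.
  exists r.
    rewrite inE; apply/andP; split.
      rewrite prim_mp //; rewrite eqn_leq mp_le //=.
      have : mp w <= mp r.
        apply: mp_min => //; first exact: mp_pos.
        by move=> j; rewrite -!fr; apply: mp_per.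
      by rewrite E'.
    by apply/(antiperP _ e0) => j; rewrite !fr A'.
  by apply: fw_ext => j; rewrite fw_phi // fr.
move: rW; rewrite inE => /andP[pr ar].
have fp : forall j, fw (phi d r) j = fw r j by move=> j; apply: fw_phi.
have Ar := (antiperP _ e0) ar.
have mr : mp r = 2 * e by apply/eqP; rewrite -prim_mp.
apply/andP; split.
  apply/(antiperP _ d0) => j; rewrite !fp.
  have [t Et] : exists t, d = e + t * (2 * e).
    exists (d %/ e)./2; rewrite -{1}(divnK ed) -{1}(odd_double_half (d %/ e)) eo.
    rewrite -mul2n; lia.
  have -> : j + d = (j + e) + t * (2 * e) by rewrite -addnA -Et.
  by rewrite (perM _ (fw_perP r)) Ar.
have mw : mp (phi d r) = 2 * e.
  apply/eqP; rewrite eqn_leq; apply/andP; split.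
    by apply: mp_min => // j; rewrite !fp fw_perP.
  rewrite -mr; apply: mp_min => //; first exact: mp_pos.
  by move=> j; rewrite -!fp; apply: mp_per.
rewrite (key_val _ mw); last by apply: dvdn_leq.
by apply/eqP; apply: val_inj; rewrite /= inordK // ltnS; apply: dvdn_leq.
Qed.

Lemma sum_T d : 0 < d ->
  2 ^ d = \sum_(e < d.+1 | (e %| d) && odd (d %/ e)) #|Fixs e| * (2 * e).
Proof.
move=> d0.
rewrite -card_T // -sum1_card.
rewrite (partition_big (@key d) (fun e : 'I_d.+1 => (e %| d) && odd (d %/ e))); last first.
  move=> w wT; have [e [E e0 ed eo _]] := T_key d0 wT.
  have ele : e <= d by apply: dvdn_leq.
  by rewrite (key_val ele E) inordK ?ltnS // ed eo.
apply: eq_bigr => e /andP[ed eo].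
have e0 : 0 < e by case: (posnP e) ed => [->|//]; rewrite dvd0n => /eqP E; move: d0; rewrite E.
rewrite sum1dep_card (fiber d0 ed eo) card_in_imset ?card_W //.
move=> r1 r2 _ _ E; apply: fw_ext => j.
by rewrite -(fw_phi r1 j d0 ed) -(fw_phi r2 j d0 ed) E.
Qed.

Lemma sqfP n : 0 < n -> reflect (forall q, prime q -> ~~ (q * q %| n)) (squarefree n).
Proof.
move=> n0; apply: (iffP forallP) => [H q pq | H q].
  apply/negP => qq.
  have qn : q < n.+1.
    rewrite ltnS; apply: leq_trans (dvdn_leq n0 qq).
    by rewrite leq_pmull // prime_gt0.
  by move: (H (Ordinal qn)) => /= /implyP /(_ pq) /negP.
by apply/implyP => pq; apply: H.
Qed.

Lemma sqf_dvd m n : 0 < n -> m %| n -> squarefree n -> squarefree m.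
Proof.
move=> n0 mn /(sqfP n0) H.
have m0 : 0 < m by case: (posnP m) mn => [->|//]; rewrite dvd0n => /eqP E; move: n0; rewrite E.
apply/(sqfP m0) => q pq; apply/negP => qm.
by move/negP: (H q pq); apply; apply: dvdn_trans mn.
Qed.

Lemma sqf_mulp e p : 0 < e -> prime p -> ~~ (p %| e) -> squarefree e -> squarefree (e * p).
Proof.
move=> e0 pp pe /(sqfP e0) H.
apply/(sqfP _) => [|q pq]; first by rewrite muln_gt0 e0 prime_gt0.
apply/negP => qq.
case: (eqVneq q p) => [Eq | nqp].
  subst q; move: qq; rewrite dvdn_pmul2r ?prime_gt0 // => pe'.
  by move/negP: pe.
have cop : coprime (q * q) p.
  by rewrite coprimeMl andbb prime_coprime // dvdn_prime2 // eq_sym (negbTE nqp).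
by move/negP: (H q pq); apply; rewrite -(Gauss_dvdl _ cop).
Qed.

Lemma sqf_4 n : 0 < n -> 4 %| n -> ~~ squarefree n.
Proof. by move=> n0 h; apply/negP => /(sqfP n0) /(_ 2 isT); rewrite h. Qed.

Lemma odd_sumE (I : finType) (P : pred I) (G : I -> nat) :
  odd (\sum_(i | P i) G i) = odd (\sum_(i | P i) odd (G i)).
Proof.
apply: (big_rec2 (fun y1 y2 => odd y1 = odd y2)) => // i y1 y2 _ E.
by rewrite !oddD oddb E.
Qed.

Lemma sum_bool_card (I : finType) (P : pred I) (b : pred I) :
  \sum_(i | P i) (b i : nat) = #|[set i | P i && b i]|.
Proof.
rewrite -sum1dep_card [RHS]big_mkcondr [LHS]big_mkcond [RHS]big_mkcond /=.
by apply: eq_bigr => i _; case: (P i); case: (b i).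
Qed.

Definition Sv d := [set e : 'I_d.+1 | (e %| d) && odd (d %/ e) && squarefree e].

Lemma exp2_big a : 2 <= a -> a.+1 < 2 ^ a.
Proof.
elim: a => [|a IH] //; case: a IH => [|a] IH // _.
case: a IH => [|a] IH //.
rewrite expnS; have := IH isT; lia.
Qed.

Lemma pos_of_dvd e d : 0 < d -> e %| d -> 0 < e.
Proof. by move=> d0; case: (posnP e) => [->|//]; rewrite dvd0n => /eqP E; move: d0; rewrite E. Qed.

Lemma odd_part n : 0 < n -> odd (n %/ 2 ^ logn 2 n).
Proof.
move=> n0; apply/negPn/negP => ev.
have h : 2 ^ (logn 2 n).+1 %| n.
  rewrite expnSr -{2}(divnK (pfactor_dvdnn 2 n)) mulnC dvdn_pmul2r ?expn_gt0 //.
  by rewrite dvdn2.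
by move: h; rewrite pfactor_dvdn // ltnn.
Qed.

Lemma sqf_pow a : squarefree (2 ^ a) = (2 ^ a == a.+1).
Proof.
case: a => [|[|a]].
- rewrite eqxx; apply/(sqfP _) => // q pq; apply/negP => /dvdn_leq; rewrite expn_gt0 => /(_ isT).
  have := prime_gt1 pq; nia.
- rewrite eqxx; apply/(sqfP _) => // q pq; apply/negP => /dvdn_leq; rewrite expn_gt0 => /(_ isT).
  have := prime_gt1 pq; nia.
have h : 2 <= a.+2 by [].
rewrite (negbTE (sqf_4 _ _)) ?expn_gt0 //.
  by have := exp2_big h; case: eqP => // ->; rewrite ltnn.
by rewrite !expnS mulnA dvdn_mulr.
Qed.

Lemma C_pow a : odd #|Sv (2 ^ a)| = (2 ^ a == (logn 2 (2 ^ a)).+1).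
Proof.
rewrite pfactorK // -sqf_pow.
set d := 2 ^ a.
have d0 : 0 < d by rewrite expn_gt0.
have onlyd : forall e : 'I_d.+1, e \in Sv d -> nat_of_ord e = d.
  move=> e; rewrite inE => /andP[/andP[ed eo] _].
  move/(dvdn_pfactor _ _ (isT : prime 2)): ed => [b ba Eb].
  move: eo; rewrite Eb /d -expnB // oddX orbF subn_eq0 => ab.
  by rewrite (_ : b = a) //; apply/eqP; rewrite eqn_leq ba ab.
case: (boolP (squarefree d)) => sd.
  have -> : Sv d = [set ord_max].
    apply/setP => e; rewrite in_set1; apply/idP/eqP => [eS | ->].
      by apply: val_inj; rewrite /= (onlyd _ eS).
    by rewrite inE /= dvdnn divnn d0 sd.
  by rewrite cards1.
have -> : Sv d = set0.
  apply/setP => e; rewrite in_set0; apply/negP => eS.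
  by move: (eS); rewrite inE (onlyd _ eS) (negbTE sd) andbF.
by rewrite cards0.
Qed.

Lemma step d p e : 0 < d -> prime p -> odd p -> p %| d -> e %| d -> odd (d %/ e) -> squarefree e ->
  let v := (if p %| e then e %/ p else e * p) in
  [/\ v %| d, odd (d %/ v), squarefree v, v != e & (if p %| v then v %/ p else v * p) = e].
Proof.
move=> d0 pp po pd ed eo se v.
have e0 : 0 < e := pos_of_dvd d0 ed.
have p1 := prime_gt1 pp.
have p0 : 0 < p by apply: ltnW.
have Ed : d = e * (d %/ e) by rewrite mulnC divnK.
rewrite /v; case: ifP => pe.
  set u := e %/ p.
  have Ee : e = u * p by rewrite /u divnK.
  have u0 : 0 < u by move: e0; rewrite Ee muln_gt0 => /andP[].
  have ud : u %| d by apply: dvdn_trans ed; rewrite Ee dvdn_mulr.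
  have Edu : d %/ u = p * (d %/ e).
    by rewrite {1}Ed {1}Ee -mulnA mulKn.
  have pu : ~~ (p %| u).
    apply/negP => pu; move/(sqfP e0): se => /(_ p pp) /negP; apply.
    by rewrite Ee mulnC dvdn_pmul2l.
  split => //.
  - by rewrite Edu oddM po.
  - by apply: sqf_dvd se; rewrite // Ee dvdn_mulr.
  - by rewrite Ee -{1}(muln1 u) eqn_pmul2l // neq_ltn p1.
  - by rewrite (negbTE pu) -Ee.
have pk : p %| d %/ e.
  have : p %| e * (d %/ e) by rewrite -Ed.
  by rewrite Euclid_dvdM // pe.
set k := d %/ p %/ e.
have Ek : d %/ e = p * (d %/ e %/ p) by rewrite mulnC divnK.
split.
- by rewrite {1}Ed Ek mulnA dvdn_mulr.
- have ko : odd (d %/ e %/ p) by have := eo; rewrite {1}Ek oddM => /andP[].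
  by rewrite {1}Ed Ek mulnA mulKn ?muln_gt0 ?e0.
- by apply: sqf_mulp => //; rewrite pe.
- by rewrite -{2}(muln1 e) eqn_pmul2l // neq_ltn p1 orbT.
by rewrite dvdn_mull // mulnK.
Qed.

Lemma C_odd d p : 0 < d -> prime p -> odd p -> p %| d -> odd #|Sv d| = false.
Proof.
move=> d0 pp po pd.
pose v (e : nat) := if p %| e then e %/ p else e * p.
pose g := fun e : 'I_d.+1 => (inord (v e) : 'I_d.+1).
have inS : forall e, e \in Sv d ->
    [/\ v e %| d, odd (d %/ v e), squarefree (v e), v e != e & v (v e) = e].
  by move=> e; rewrite inE => /andP[/andP[ed eo] se]; apply: step.
have gv : forall e, e \in Sv d -> nat_of_ord (g e) = v e.
  move=> e /inS [h _ _ _ _]; rewrite /g inordK // ltnS; exact: dvdn_leq.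
have gS : forall e, e \in Sv d -> g e \in Sv d.
  move=> e eS; have [h1 h2 h3 _ _] := inS e eS.
  by rewrite inE gv // h1 h2 h3.
rewrite (@invol_odd _ _ g) //.
  have -> : [set x in Sv d | g x == x] = set0.
    apply/setP => e; rewrite in_set0 inE; apply/negP => /andP[eS /eqP E].
    have [_ _ _ ne _] := inS e eS.
    by move: ne; rewrite -(gv e eS) E eqxx.
  by rewrite cards0.
move=> e eS; apply: val_inj => /=.
by rewrite (gv _ (gS e eS)) (gv e eS); have [_ _ _ _ ->] := inS e eS.
Qed.

Lemma C d : 0 < d -> odd #|Sv d| = (d == (logn 2 d).+1).
Proof.
move=> d0.
set a := logn 2 d.
have Ed : d %/ 2 ^ a * 2 ^ a = d by rewrite divnK // pfactor_dvdnn.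
have mo : odd (d %/ 2 ^ a) by apply: odd_part.
case: (ltngtP (d %/ 2 ^ a) 1) => [m0 | m1 | m1].
- by move: mo; rewrite ltnS leqn0 in m0; rewrite (eqP m0).
- have pp := pdiv_prime m1.
  have pm := pdiv_dvd (d %/ 2 ^ a).
  have po : odd (pdiv (d %/ 2 ^ a)).
    apply/negPn/negP => pe.
    have : 2 %| d %/ 2 ^ a by apply: dvdn_trans pm; rewrite dvdn2.
    by rewrite dvdn2 mo.
  have md : d %/ 2 ^ a %| d by apply/dvdnP; exists (2 ^ a); rewrite mulnC divnK // pfactor_dvdnn.
  have pd : pdiv (d %/ 2 ^ a) %| d := dvdn_trans pm md.
  rewrite (C_odd d0 pp po pd); apply/esym/negP => /eqP E.
  have h : 2 ^ a <= d by apply: dvdn_leq => //; apply: pfactor_dvdnn.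
  have a1 : a <= 1.
    rewrite leqNgt; apply/negP => a2.
    by have := exp2_big a2; rewrite -E ltnNge h.
  have dle : d <= 2 by rewrite E; lia.
  have := dvdn_leq d0 pd; have := prime_gt1 pp => g1 le2.
  have p2 : pdiv (d %/ 2 ^ a) = 2 by lia.
  by move: po; rewrite p2.
- have E2 : 2 ^ a = d by rewrite -Ed m1 mul1n.
  by have := C_pow a; rewrite pfactorK // E2.
Qed.

Lemma val2 d e : 0 < d -> e %| d -> odd (d %/ e) -> logn 2 e = logn 2 d.
Proof.
move=> d0 ed eo.
have e0 := pos_of_dvd d0 ed.
have k0 : 0 < d %/ e by apply: odd_gt0.
have : logn 2 (e * (d %/ e)) = logn 2 e.
  by rewrite lognM // [logn 2 (d %/ e)]logn_coprime ?addn0 // coprime2n.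
by rewrite mulnC divnK.
Qed.

Lemma nt (F : nat -> nat) :
  (forall d, 0 < d -> 2 ^ d = \sum_(e < d.+1 | (e %| d) && odd (d %/ e)) F e * (2 * e)) ->
  forall d, 0 < d -> odd (F d) = squarefree d.
Proof.
move=> HF; elim/ltn_ind => d IH d0.
set a := logn 2 d.
have termE : forall e : 'I_d.+1, (e %| d) && odd (d %/ e) ->
    F e * (2 * e) = 2 ^ a.+1 * (F e * (e %/ 2 ^ a)).
  move=> e /andP[ed eo].
  have la := val2 d0 ed eo.
  have qe : 2 ^ a %| e by rewrite /a -la pfactor_dvdnn.
  rewrite expnS.
  have key : forall x y z w, x * y = w -> z * (2 * w) = 2 * y * (z * x).
    by move=> x y z w <-; nia.
  by apply: key; apply: divnK.
have HFd := HF d d0.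
rewrite (eq_bigr _ termE) -big_distrr /= in HFd.
set S := \sum_(_ < _ | _) _ in HFd.
have ad : a.+1 <= d.
  have h : 2 ^ a <= d by apply: dvdn_leq => //; apply: pfactor_dvdnn.
  by rewrite -(ltn_exp2l _ _ (isT : 1 < 2)); apply: leq_ltn_trans h (ltn_expl _ _).
have ES : S = 2 ^ (d - a.+1).
  apply/eqP; rewrite -(@eqn_pmul2l (2 ^ a.+1)) ?expn_gt0 // -expnD subnKC //.
  by rewrite HFd.
have oS : odd S = (d == a.+1).
  by rewrite ES oddX orbF subn_eq0 eqn_leq ad andbT.
move: oS; rewrite /S odd_sumE.
have oddq : forall e : 'I_d.+1, (e %| d) && odd (d %/ e) ->
    odd (F e * (e %/ 2 ^ a)) = odd (F e).
  move=> e /andP[ed eo]; rewrite oddM.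
  have la := val2 d0 ed eo.
  by rewrite /a -la odd_part ?andbT // (pos_of_dvd d0 ed).
rewrite (eq_bigr (fun e : 'I_d.+1 => nat_of_bool (odd (F e)))); last by move=> e /oddq ->.
have vmax : ((@ord_max d) %| d) && odd (d %/ (@ord_max d)) by rewrite /ord_max /= dvdnn divnn d0.
rewrite (bigD1 ord_max vmax) /=.
have -> : \sum_(i < d.+1 | ((i %| d) && odd (d %/ i)) && (i != ord_max)) odd (F i)
        = \sum_(i < d.+1 | ((i %| d) && odd (d %/ i)) && (i != ord_max)) squarefree i.
  apply: eq_bigr => e /andP[/andP[ed eo] ne].
  have e0 := pos_of_dvd d0 ed.
  have el : e < d.
    have := ltn_ord e; rewrite ltnS leq_eqVlt => /orP[/eqP E|//].
    by move: ne; rewrite (_ : e = ord_max) ?eqxx //; apply: val_inj.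
  by rewrite IH.
set X := \sum_(i < d.+1 | _ && (i != ord_max)) nat_of_bool (squarefree i).
move=> E1.
have E2 := C d0.
rewrite -sum_bool_card (bigD1 ord_max vmax) /= -/X in E2.
move: E1 E2; rewrite !oddD !oddb => E1 E2.
apply: (@addIb (odd X)); rewrite E1 E2 //.
Qed.

Theorem theorem2p5 (d : nat) : 0 < d ->
  odd #|primitive_necklaces d| = squarefree d.
Proof.
move=> d0; rewrite odd_P.
exact: (@nt (fun e => #|Fixs e|) (fun d d0 => sum_T d0) d d0).
Qed.
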